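(* In the homogeneous UAV Persistent Service model ($g_i=g$ for all $i$, $2g<f$), run HoRR with $M=N+\lceil \frac{c+2g}{f-2g}N\rceil$ UAVs and let $x=\frac{f-2g}{N}$. Label the locations $1,\dots,N$ so that the UAV placed at location $i$ at time $0$ is the one relieved at time $ix$. Then, for every $k\ge 1$, the UAV initially placed at location $i$ is instructed to go recharge for the $k$-th time at time $$t_i^k=\left(i+(k-1)N+(k-1)\left\lceil\frac{2g+c}{x}\right\rceil\right)x .$$
   Context: UAV Persistent Service model: single recharging station (RS), finite set $\mathcal N$ of $N$ aerial locations, identical UAVs with maximum flight time $f>0$ on a full battery and recharge/battery-swap time $c\ge0$ at the RS; flying between RS and any location takes $g>0$ time units (homogeneous case), with $2g<f$. A UAV covers a location while it is present there. HoRR schedule: with $x=\frac{f-2g}{N}$, at time $0$ one fully charged UAV is at each location and the remaining (backup) UAVs are fully charged at the RS. For each $k=1,2,\dots$, a fully charged backup departs the RS at time $kx-g$ and at time $kx$ replaces the serving UAV with least remaining energy (ties broken arbitrarily); the relieved UAV (''instructed to recharge'' at time $kx$) flies back to the RS (arriving at $kx+g$), recharges for $c$ time units, and then becomes a backup. Backups are dispatched in the order in which they became ready, so a UAV ready at the RS at time $s$ performs the first replacement at a time $jx$ ($j\in\mathbb N$) with $jx\ge s+g$ not already assigned to an earlier-ready backup. *)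

(* Defs.v *)
From mathcomp Require Import all_boot all_order all_algebra.
Set Implicit Arguments. Unset Strict Implicit. Unset Printing Implicit Defensive.
Import Order.TTheory GRing.Theory Num.Theory.
Local Open Scope ring_scope.

(* Locations : 'I_N (location label i+1 in the paper corresponds to i : 'I_N).
   A run of HoRR is described by
     u0  : 'I_N -> 'I_M   UAV placed at each location at time 0,
     b k : 'I_M           backup departing at k*x - g and arriving at k*x (k >= 1),
     loc k : 'I_N         location where the replacement at time k*x happens (k >= 1).
   Everything else (who serves where, who is relieved, readiness) is derived. *)

Section HoRR.
Variables (R : archiRealFieldType) (N M : nat) (f g c : R).
Variables (u0 : 'I_N -> 'I_M) (b : nat -> 'I_M) (loc : nat -> 'I_N).

Definition xstep : R := (f - 2 * g) / N%:R.

(* step at which the UAV currently serving location l (after the first k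
   replacements) was placed there; 0 = initial placement at time 0 *)
Fixpoint placed (k : nat) (l : 'I_N) : nat :=
  match k with
  | 0 => 0%N
  | k'.+1 => if l == loc k then k else placed k' l
  end.

Fixpoint serving (k : nat) (l : 'I_N) : 'I_M :=
  match k with
  | 0 => u0 l
  | k'.+1 => if l == loc k then b k else serving k' l
  end.

(* UAV relieved ("instructed to recharge") at time k*x, k >= 1 *)
Definition relieved (k : nat) : 'I_M := serving k.-1 (loc k).

(* remaining energy at time t of a UAV placed at step j (j = 0: fully charged
   at its location at time 0; j >= 1: left the RS fully charged at j*x - g) *)
Definition energy (j : nat) (t : R) : R :=
  if j == 0%N then f - t else f - (t - (j%:R * xstep - g)).

Inductive status := Serving | ReadyAt of R.

(* status of UAV u after the first k replacements: serving a location, or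
   (being / going to be) a fully charged backup at the RS from time s on *)
Fixpoint status_of (k : nat) (u : 'I_M) : status :=
  match k with
  | 0 => if u \in codom u0 then Serving else ReadyAt 0
  | k'.+1 => if u == b k then Serving
             else if u == relieved k then ReadyAt (k%:R * xstep + g + c)
             else status_of k' u
  end.

(* The run (u0, b, loc) follows the HoRR rules:
   - one distinct UAV at each location at time 0, the others are backups;
   - at each step k >= 1 the departing backup b k is ready at the RS by the
     departure time k*x - g, and backups are dispatched in the order in which
     they became ready (FIFO, ties arbitrary);
   - the replaced UAV is a serving UAV with least remaining energy at time k*x
     (ties arbitrary). *)
Definition HoRR_run : Prop :=
  injective u0 /\
  forall k : nat, (0 < k)%N ->
    (exists s : R, status_of k.-1 (b k) = ReadyAt s /\
        s <= k%:R * xstep - g /\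
        forall (u : 'I_M) (s' : R), status_of k.-1 u = ReadyAt s' -> s <= s') /\
    (forall l : 'I_N,
        energy (placed k.-1 (loc k)) (k%:R * xstep)
          <= energy (placed k.-1 l) (k%:R * xstep)).

Definition nb_relief (u : 'I_M) (T : nat) : nat :=
  \sum_(1 <= j < T.+1) (relieved j == u).

End HoRR.

(* Main.v *)
Require Import Defs.
From mathcomp Require Import all_boot all_order all_algebra.
From mathcomp Require Import zify ring lra.
Import Order.TTheory GRing.Theory Num.Theory.
Set Implicit Arguments. Unset Strict Implicit. Unset Printing Implicit Defensive.

Lemma count_mod P i n : (0 < P)%N -> (i < P)%N ->
  \sum_(0 <= j < i.+1 + n * P) ((j %% P)%N == i) = n.+1.
Proof.
move=> P0 iP; elim: n => [|n IH].
  rewrite mul0n addn0 big_nat_recr //= modn_small // eqxx.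
  rewrite big_nat_cond big1 // => j /andP[/andP[_ hj] _].
  have -> : (j %% P = j)%N by apply: modn_small; lia.
  by rewrite (ltn_eqF hj).
rewrite (big_cat_nat _ (n := i.+1 + n * P)) /=; [|lia|lia].
rewrite IH.
have -> : (i.+1 + n.+1 * P = (i.+1 + n * P + P.-1).+1)%N by rewrite mulSn; lia.
rewrite big_nat_recr /=; last lia.
have -> : ((i.+1 + n * P + P.-1) %% P = i)%N.
  have -> : (i.+1 + n * P + P.-1 = n.+1 * P + i)%N by rewrite mulSn; lia.
  by rewrite modnMDl modn_small.
rewrite eqxx big_nat_cond big1; first lia.
move=> j /andP[/andP[h1 h2] _].
case: eqP => // E; exfalso.
have Ej := divn_eq j P; rewrite E in Ej.
set q := (j %/ P)%N in Ej.
have a1 : (n * P < q * P)%N by lia.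
have a2 : (q * P < n.+1 * P)%N by rewrite mulSn; lia.
rewrite ltn_pmul2r // in a1; rewrite ltn_pmul2r // in a2; lia.
Qed.

Section Proof.
Variables (R : archiRealFieldType) (N M D : nat) (f g c : R).
Variables (u0 : 'I_N -> 'I_M) (b : nat -> 'I_M) (loc : nat -> 'I_N).
Hypothesis HR : HoRR_run f g c u0 b loc.
Hypothesis hN : (0 < N)%N.
Hypothesis hg : (0 < g)%R.
Hypothesis hc : (0 <= c)%R.
Hypothesis hx : (0 < xstep N f g)%R.
Hypothesis hM : M = (N + D)%N.
Hypothesis hlab : forall i : 'I_N, relieved u0 b loc i.+1 = u0 i.

Local Notation x := (xstep N f g).
Ltac lra' := have ? := hg; have ? := hc; have ? := hx; lra.
Local Notation st := (status_of f g c u0 b loc).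
Local Notation srv := (serving u0 b loc).
Local Notation rel := (relieved u0 b loc).
Local Notation pl := (placed loc).

Lemma bready k : (0 < k)%N -> exists s, st k.-1 (b k) = ReadyAt s.
Proof. move=> k0; have [_ H] := HR; have [[s [Hs _]] _] := H k k0; by exists s. Qed.

Lemma inv q : injective (srv q) /\ forall l, st q (srv q l) = Serving R.
Proof.
elim: q => [|q [IHi IHs]].
  split; first by case: HR. by move=> l /=; rewrite codom_f.
have [s Hs] := bready (ltn0Sn q); rewrite /= in Hs.
have bns : forall l, b q.+1 != srv q l.
  by move=> l; apply/eqP => E; move: Hs; rewrite E IHs.
split.
  move=> l1 l2 /=.
  case: (eqVneq l1 (loc q.+1)) => [->|n1]; case: (eqVneq l2 (loc q.+1)) => [->|n2] //.
  - by move=> E; move: (bns l2); rewrite E eqxx.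
  - by move=> E; move: (bns l1); rewrite E eqxx.
  - by move/IHi.
move=> l /=.
case nl: (l == loc q.+1); first by rewrite eqxx.
case: eqP => // _.
rewrite /relieved /=.
case: eqP => [/IHi E|_]; first by rewrite E eqxx in nl.
exact: IHs.
Qed.

Lemma stat_cases q u s : st q u = ReadyAt s ->
  (s = 0%R /\ u \notin codom u0 /\ forall p, (0 < p <= q)%N -> u != b p) \/
  (exists j, (0 < j <= q)%N /\ s = (j%:R * x + g + c)%R /\ u = rel j /\
      forall p, (j < p <= q)%N -> u != b p).
Proof.
elim: q s => [|q IH] s /=.
  case: ifP => // H [<-]; left; split => //; split.
  by [].
  by move=> p /andP[a b']; lia.
case: eqP => // nb; case: eqP => [-> [<-]|nr].
  right; exists q.+1; split; first by lia. split => //; split => //.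
  by move=> p; lia.
move/IH => [[-> [H1 H2]]|[j [Hj [-> [Hu H]]]]].
  left; split => //; split => // p Hp.
  case: (eqVneq p q.+1) => [->|np]; first by apply/eqP.
  apply: H2; lia.
right; exists j; split; first lia. split => //; split => // p Hp.
case: (eqVneq p q.+1) => [->|np]; first by apply/eqP.
apply: H; lia.
Qed.

Lemma stat_prop q u s : st q u = ReadyAt s -> u != b q.+1 -> st q.+1 u = ReadyAt s.
Proof.
move=> H nb /=; rewrite (negbTE nb).
case: eqP => // E; move: H; rewrite E /relieved /=.
by have [_ ->] := inv q.
Qed.

Lemma stat_rel j : (0 < j)%N -> st j (rel j) = ReadyAt (j%:R * x + g + c)%R.
Proof.
case: j => // q _ /=.
have [s Hs] := bready (ltn0Sn q).
case: eqP => [E|_]; last by rewrite eqxx.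
move: Hs; rewrite /= -E /relieved /=.
by have [_ ->] := inv q.
Qed.

Lemma RA0 q u : u \notin codom u0 -> (forall p, (0 < p <= q)%N -> u != b p) ->
  st q u = ReadyAt 0%R.
Proof.
move=> nc; elim: q => [|q IH] H /=; first by rewrite (negbTE nc).
apply: stat_prop; last by apply: H; lia.
by apply: IH => p Hp; apply: H; lia.
Qed.

Lemma serv_pl q l : srv q l = if pl q l == 0%N then u0 l else b (pl q l).
Proof.
elim: q => [|q IH] //=.
by case: eqP.
Qed.

Lemma pl_le q l : (pl q l <= q)%N.
Proof. elim: q => //= q IH; case: eqP => _; lia. Qed.

Lemma pl_loc q l : (0 < pl q l)%N -> loc (pl q l) = l.
Proof. elim: q => //= q IH; case: eqP => // ->. Qed.

Lemma pl_ge q p : (0 < p <= q)%N -> (p <= pl q (loc p))%N.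
Proof.
elim: q => [|q IH] Hp /=; first lia.
case: eqP => E; first lia.
case: (eqVneq p q.+1) => [Ep|ne]; first by rewrite Ep in E.
have := IH ltac:(lia); lia.
Qed.

Hypothesis hD : (0 < D)%N.

Lemma modn_window a b1 : (a <= b1)%N -> (b1 < a + N)%N -> (a %% N = b1 %% N)%N -> a = b1.
Proof.
move=> ab bN E.
have := eqn_modDl a 0 (b1 - a) N.
rewrite addn0 subnKC // E eqxx mod0n modn_small; last lia.
move/esym/eqP; lia.
Qed.

Lemma energy_mono j1 j2 t : (0 < j1)%N -> (0 < j2)%N ->
  (energy N f g j1 t <= energy N f g j2 t)%R -> (j1 <= j2)%N.
Proof.
rewrite /energy; case: j1 => // j1; case: j2 => // j2 _ _ /=.
move=> H.
have : (j1.+1%:R * x <= j2.+1%:R * x)%R by lra'.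
by rewrite ler_pM2r // ler_nat.
Qed.

Lemma posj j : (0 < j)%N -> (0 < j%:R * x + g + c)%R.
Proof.
move=> j0; have : (0 <= j%:R * x)%R by apply: mulr_ge0 => //; apply: ltW.
move=> h; set t := (j%:R * x)%R in h *; lra'.
Qed.

Lemma card_nc : #|[pred u | u \notin codom u0]| = D.
Proof.
have := cardC [pred u | u \in codom u0].
have -> : #|[pred u | u \in codom u0]| = #|codom u0| by apply: eq_card.
rewrite card_codom; last by case: HR.
rewrite (@eq_card _ [predC [pred u | u \in codom u0]] [pred u | u \notin codom u0]) //.
rewrite !card_ord => E; have := hM; lia.
Qed.

Definition sig m : R := if (m <= D)%N then 0%R else ((m - D)%:R * x + g + c)%R.

Definition Sinv m := st m.-1 (b m) = ReadyAt (sig m) /\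
  ((m <= D)%N -> b m \notin codom u0) /\ ((D < m)%N -> b m = rel (m - D)).
Definition Linv m := val (loc m) = (m.-1 %% N)%N /\ ((N < m)%N -> rel m = b (m - N)).

Lemma stepS n : (forall p, (0 < p <= n)%N -> Sinv p /\ Linv p) -> Sinv n.+1.
Proof.
move=> IH.
have IHS : forall p, (0 < p <= n)%N -> Sinv p by move=> p Hp; case: (IH p Hp).
have [_ H] := HR; have [[s [Hs [_ Hmin]]] _] := H n.+1 (ltn0Sn n).
rewrite /= in Hs Hmin.
rewrite /Sinv /sig /=.
case: (leqP n.+1 D) => HD.
- have [u [Hu1 Hu2]] : exists u, u \notin codom u0 /\ forall p, (0 < p <= n)%N -> u != b p.
    pose sq := [seq b p | p <- iota 1 n].
    have : ~~ ([pred u | u \notin codom u0] \subset sq).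
      apply/negP => /subset_leq_card; rewrite card_nc.
      have := card_size sq; rewrite size_map size_iota => h1 h2.
have := leq_trans h2 h1; lia.
    move/subsetPn => [u Hu Hus]; exists u; split => // p Hp.
    apply/eqP => E; move: Hus; rewrite E; apply/negP/negPn.
    apply: map_f; rewrite mem_iota; lia.
  have s0 := Hmin u 0%R (RA0 Hu1 Hu2).
  case: (stat_cases Hs) => [[Es [Hc _]]|[j [Hj [Es _]]]].
  + by rewrite Hs Es; split => //; split => // _; lia.
  + exfalso; have := posj (j := j) ltac:(lia); rewrite -Es => h; by have := lt_le_trans h s0; rewrite ltxx.
- have [j0 Ej0] : exists j0, j0 = (n.+1 - D)%N by eexists.
  have Hst : forall t, (j0 + t <= n)%N -> st (j0 + t) (rel j0) = ReadyAt (j0%:R * x + g + c)%R.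
    elim => [|t IHt] Ht.
      by rewrite addn0; apply: stat_rel; lia.
    rewrite addnS; apply: stat_prop; first by apply: IHt; lia.
    apply/eqP => E.
    have [Sb _] := IHS (j0 + t).+1 ltac:(lia).
    rewrite /= -E IHt in Sb; last lia.
    move: Sb; rewrite /sig; case: ifP => HkD [].
      by move=> h; have := posj (j := j0) ltac:(lia); rewrite h ltxx.
    move=> h.
    have : (((j0 + t).+1 - D)%:R = j0%:R :> R)%R.
      apply: (mulIf (x := x)); first by apply/lt0r_neq0.
      by move: h => /(addIr c) /(addIr g) ->.
    move/eqP; rewrite eqr_nat => /eqP; lia.
  have Hj0 := Hst (n - j0)%N ltac:(lia).
  rewrite (_ : (j0 + (n - j0))%N = n) in Hj0; last by lia.
  have s_le := Hmin _ _ Hj0.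
  case: (stat_cases Hs) => [[Es [Hc Hb]]|[j [Hj [Es [Eb Hb]]]]].
  + exfalso.
    pose sq := [seq b p | p <- iota 1 D].
    have uq : uniq sq.
      rewrite map_inj_in_uniq ?iota_uniq // => p1 p2; rewrite !mem_iota => h1 h2 E.
      have key : forall q1 q2, (0 < q1 < q2)%N -> (q2 <= D)%N -> b q2 != b q1.
        move=> q1 q2 hq hq2.
        have [Sb [Nc _]] := IHS q2 ltac:(lia).
        rewrite /sig hq2 in Sb.
        case: (stat_cases Sb) => [[_ [_ H2]]|[j [Hj [Es' _]]]].
          by apply: H2; lia.
        by have := posj (j := j) ltac:(lia); rewrite -Es' ltxx.
      case: (ltngtP p1 p2) => // hp.
        by move: (key p1 p2 ltac:(lia) ltac:(lia)); rewrite E eqxx.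
      by move: (key p2 p1 ltac:(lia) ltac:(lia)); rewrite E eqxx.
    have : (D.+1 <= #|[pred u | u \notin codom u0]|)%N.
      apply/card_geqP; exists (b n.+1 :: sq); split.
      * rewrite /= uq andbT; apply/negP => /mapP [p]; rewrite mem_iota => hp E.
        by move: (Hb p ltac:(lia)); rewrite E eqxx.
      * by rewrite /= size_map size_iota.
      * move=> u; rewrite inE => /orP [/eqP ->|/mapP [p]] //.
        rewrite mem_iota => hp ->.
        by have [_ [Nc _]] := IHS p ltac:(lia); rewrite inE; apply: Nc; lia.
    rewrite card_nc; lia.
  + have j_le : (j <= j0)%N.
      move: s_le; rewrite Es => h.
      have : (j%:R * x <= j0%:R * x)%R by rewrite !lerD2r in h.
      by rewrite ler_pM2r // ler_nat.
    case: (ltnP j j0) => jlt.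
      exfalso; have [_ [_ Sb]] := IHS (j + D)%N ltac:(lia).
      have := Hb (j + D)%N ltac:(lia).
      by rewrite Sb; last lia; rewrite addnK -Eb eqxx.
    have jj : j = j0 by lia.
    split; first by rewrite Hs Es jj Ej0.
    split; first by [].
    by move=> _; rewrite Eb jj Ej0.
Qed.

Lemma stepL n : (forall p, (0 < p <= n)%N -> Sinv p /\ Linv p) -> Linv n.+1.
Proof.
move=> IH.
have IHL : forall p, (0 < p <= n)%N -> Linv p by move=> p Hp; case: (IH p Hp).
rewrite /Linv /=.
case: (leqP n.+1 N) => HN.
- pose i := Ordinal HN.
  have Hi := hlab i.
  have pl0 : pl n i = 0%N.
    case: (posnP (pl n i)) => // hp; exfalso.
    have Hl := pl_loc hp.
    have [Lp _] := IHL (pl n i) ltac:(have := pl_le n i; lia).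
    rewrite Hl /= modn_small in Lp; last by have := pl_le n i; lia.
    have := pl_le n i; lia.
  have Es : srv n i = u0 i by rewrite serv_pl pl0.
  have El : loc n.+1 = i.
    have [inj _] := inv n; apply: inj.
    by rewrite Es -Hi /relieved.
  by rewrite El /= modn_small //; split => // ?; lia.
- have [p0 Ep0] : exists p0, p0 = (n.+1 - N)%N by eexists.
  have plge : forall l : 'I_N, (p0 <= pl n l)%N.
    move=> l.
    have lN := ltn_ord l.
    have E := divn_eq (n.-1 - l) N.
    have rN : ((n.-1 - l) %% N < N)%N by rewrite ltn_mod.
    set r := ((n.-1 - l) %% N)%N in E rN.
    set q := ((n.-1 - l) %/ N)%N in E.
    have [Lp _] := IHL (n - r)%N ltac:(lia).
    have El : loc (n - r)%N = l.
      apply: val_inj; rewrite Lp /=.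
      have -> : (n - r).-1 = (q * N + l)%N by lia.
      by rewrite modnMDl modn_small.
    have := pl_ge (p := (n - r)%N) (q := n) ltac:(lia).
    rewrite El; lia.
  pose l0 := loc p0.
  have Pl0 : pl n l0 = p0.
    have h1 := plge l0; have h2 := pl_le n l0.
    have h3 := pl_loc (q := n) (l := l0) ltac:(lia).
    have [L1 _] := IHL (pl n l0) ltac:(lia).
    have [L2 _] := IHL p0 ltac:(lia).
    rewrite h3 L2 in L1.
    have := modn_window (a := p0.-1) (b1 := (pl n l0).-1) ltac:(lia) ltac:(lia) L1.
    lia.
  have [_ H] := HR; have [_ Hen] := H n.+1 (ltn0Sn n).
  have Hle := energy_mono (j1 := pl n (loc n.+1)) (j2 := pl n l0) ltac:(have := plge (loc n.+1); lia) ltac:(lia) (Hen l0).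
  have Pn : pl n (loc n.+1) = p0 by have := plge (loc n.+1); lia.
  have Eloc : loc n.+1 = loc p0 by rewrite -Pn pl_loc // Pn; lia.
  have [L2 _] := IHL p0 ltac:(lia).
  split.
    rewrite Eloc L2.
    have -> : n = (p0.-1 + N)%N by lia.
    by rewrite modnDr.
  move=> _; rewrite /relieved /= serv_pl Pn.
  have -> : (p0 == 0%N) = false by apply/eqP; lia.
  by rewrite Ep0.
Qed.

Lemma main n : forall m, (0 < m <= n)%N -> Sinv m /\ Linv m.
Proof.
elim: n => [|n IH] m Hm; first lia.
case: (ltnP m n.+1) => Hmn; first by apply: IH; lia.
have -> : m = n.+1 by lia.
split; [apply: stepS | apply: stepL] => //.
Qed.

Lemma charac_n n j : (0 < j <= n)%N ->
  (forall i : 'I_N, (j.-1 %% (N + D))%N = i -> rel j = u0 i) /\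
  ((N <= j.-1 %% (N + D))%N -> rel j \notin codom u0).
Proof.
elim: n j => [|n IH] j Hj; first lia.
case: (leqP j N) => hjN.
  rewrite modn_small; last lia.
  split; last lia.
  move=> i Ei; rewrite -hlab; congr rel; lia.
have [[_ [Lj _]] _] := main (n := j) (m := (j - N)%N) ltac:(lia).
have [_ [_ Lj']] := main (n := j) (m := j) ltac:(lia).
rewrite (Lj' hjN).
case: (leqP (j - N) D) => hjD.
  rewrite modn_small; last lia.
  split; last by move=> _; apply: Lj.
  move=> i Ei; have := ltn_ord i; lia.
have [[_ [_ Eb]] _] := main (n := j) (m := (j - N)%N) ltac:(lia).
rewrite (Eb hjD).
have -> : (j.-1 = (j - N - D).-1 + (N + D))%N by lia.
rewrite modnDr.
by apply: IH; lia.
Qed.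

Lemma final (i : 'I_N) k T : (1 <= k)%N -> T = (i.+1 + (k-1)*N + (k-1)*D)%N ->
  rel T = u0 i /\ nb_relief u0 b loc (u0 i) T = k.
Proof.
move=> hk.
have [K EK] : exists K, k = K.+1 by exists k.-1; lia.
rewrite EK subn1 /= => ET.
have iN := ltn_ord i.
have Tm : (T.-1 %% (N + D) = i)%N.
  have -> : T.-1 = (K*(N+D) + i)%N by rewrite ET mulnDr; lia.
  by rewrite modnMDl modn_small //; lia.
split; first by have [H _] := charac_n (n := T) (j := T) ltac:(lia); apply: H.
rewrite /nb_relief.
rewrite (eq_big_nat _ _ (F2 := fun j => (((j.-1 %% (N+D))%N == i) : nat))).
  rewrite big_add1 /=.
  have -> : T = (i.+1 + K*(N+D))%N by rewrite ET mulnDr; lia.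
  exact: (count_mod (P := N + D) (i := i) K ltac:(lia) ltac:(lia)).
move=> j hj.
have [H1 H2] := charac_n (n := j) (j := j) ltac:(lia).
have inj : injective u0 by case: HR.
case: (ltnP (j.-1 %% (N+D)) N) => hr.
  by rewrite (H1 (Ordinal hr)) // (inj_eq inj).
have ne : rel j != u0 i by apply/eqP => E; move: (H2 hr); rewrite E codom_f.
rewrite (negbTE ne).
have -> : ((j.-1 %% (N + D))%N == i) = false by apply/eqP; lia.
by [].
Qed.

End Proof.

Unset Implicit Arguments.
Local Open Scope ring_scope.

Theorem lemma1 (R : archiRealFieldType) (N M : nat) (f g c : R)
    (u0 : 'I_N -> 'I_M) (b : nat -> 'I_M) (loc : nat -> 'I_N) :
  (0 < N)%N -> 0 < g -> 0 <= c -> 2 * g < f ->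
  M%:Z = N%:Z + Num.ceil ((c + 2 * g) / (f - 2 * g) * N%:R) ->
  HoRR_run f g c u0 b loc ->
  (* labelling: the UAV placed at location i (here i.+1) is relieved at time i*x *)
  (forall i : 'I_N, relieved u0 b loc i.+1 = u0 i) ->
  forall (i : 'I_N) (k T : nat), (1 <= k)%N ->
    T%:Z = (i.+1)%:Z + ((k - 1) * N)%:Z
           + (k - 1)%:Z * Num.ceil ((2 * g + c) / xstep N f g) ->
    (* the k-th time u0 i is instructed to recharge is at time T * x *)
    relieved u0 b loc T = u0 i /\ nb_relief u0 b loc (u0 i) T = k.
Proof.
move=> hN hg hc hfg hMeq HR hlab i k T hk HT.
have hN' : (0 < N%:R :> R) by rewrite ltr0n.
have hfg' : 0 < f - 2 * g by rewrite subr_gt0.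
have hx : 0 < xstep N f g by rewrite /xstep divr_gt0.
set A := (c + 2 * g) / (f - 2 * g) * N%:R.
have EA : (2 * g + c) / xstep N f g = A.
  rewrite /A /xstep invf_div mulrA [2 * g + c]addrC.
  by rewrite -!mulrA [N%:R * _]mulrC.
have Apos : 0 < A.
  rewrite /A mulr_gt0 // divr_gt0 //.
  have : 0 <= c by []. move=> h; have h2 : 0 < 2 * g by rewrite mulr_gt0.
  by apply: (lt_le_trans h2); rewrite lerDr.
have cpos : 0 < Num.ceil A.
  by rewrite ltNge ceil_le0 -ltNge.
have [D HD] : exists D : nat, Num.ceil A = D%:Z.
  by move: cpos; case: (Num.ceil A) => [D _|D //]; exists D.
rewrite HD in hMeq; rewrite EA HD in HT.
have hM : M = (N + D)%N.
  by apply/eqP; rewrite -eqz_nat hMeq.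
have hD : (0 < D)%N by rewrite HD in cpos; rewrite -(ltz_nat 0).
have ET : T = (i.+1 + (k - 1) * N + (k - 1) * D)%N.
  by apply/eqP; rewrite -eqz_nat HT !PoszD PoszM.
exact: (final HR hN hg hc hx hM hlab hD hk ET).
Qed.
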